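(* If $f:S\to T$ is a nested tuple morphism, then $\mathrm{coal}(L_f)=L_{\mathrm{coal}(f)}$.
   Context: Nested tuples (of positive integers): a positive integer or a finite tuple of nested tuples; flattening $X^\flat$ = integer leaves left to right, $\mathrm{len}$, $\mathrm{entry}_i$. $\langle n\rangle_*=\{*,1,\dots,n\}$. A layout is $L=S:D$ with congruent nested tuples $S$ (positive) and $D$ (nonnegative); $L^\flat=S^\flat:D^\flat$. For a flat layout $L=(s_1,\dots,s_m):(d_1,\dots,d_m)$, $\mathrm{squeeze}(L)$ removes all modes $s_i:d_i$ with $s_i=1$, and $\mathrm{coal}^\flat(L)$ is obtained from $\mathrm{squeeze}(L)$ by repeatedly replacing adjacent modes $s_i,s_{i+1}:d_i,d_{i+1}$ with $d_{i+1}=s_id_i$ by the single mode $s_is_{i+1}:d_i$ until no such pair remains. For a layout $L$, writing $\mathrm{coal}^\flat(L^\flat)=(s_1,\dots,s_m):(d_1,\dots,d_m)$: $\mathrm{coal}(L)$ is this flat layout if $m>1$, the depth-$0$ layout $s_1:d_1$ if $m=1$, and $1:0$ if $m=0$. A tuple morphism $f:(s_1,\dots,s_m)\to(t_1,\dots,t_n)$ is given by a pointed map $\alpha:\langle m\rangle_*\to\langle n\rangle_*$ with each $j\ne*$ having at most one preimage and $s_i=t_{\alpha(i)}$ whenever $\alpha(i)\ne*$; a nested tuple morphism $f:S\to T$ is a tuple morphism $f^\flat:S^\flat\to T^\flat$. The encoded layout $L_f$ has shape $S$ and stride congruent to $S$ with $i$-th flattened entry $0$ if $\alpha(i)=*$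 and $\prod_{j<\alpha(i)}t_j$ otherwise (where $T^\flat=(t_1,\dots,t_n)$). Coalesce of a tuple morphism $f$ over $\alpha$: $\mathrm{squeeze}(f)$ is obtained by deleting domain indices $i$ with $s_i=1$ and codomain indices $j$ with $t_j=1$ (renumbering increasingly); write it $(s_1,\dots,s_m)\to(t_1,\dots,t_n)$ over $\beta$. On $\{1,\dots,m\}$, for $i\le i'$ set $i\sim i'$ if either $\beta(i'')=*$ for all $i\le i''\le i'$, or $\beta(i'')=\beta(i)+(i''-i)$ for all $i\le i''\le i'$. On $\{1,\dots,n\}$, for $j\le j'$ set $j\sim j'$ if there is $i$ with $\beta(i+t)=j+t$ for all $0\le t\le j'-j$. The classes are intervals, ordered increasingly, identified with $\{1,\dots,\bar m\}$ and $\{1,\dots,\bar n\}$; $\bar s_{[i]}=\prod_{i'\in[i]}s_{i'}$, $\bar t_{[j]}=\prod_{j'\in[j]}t_{j'}$, $\bar\beta([i])=[\beta(i)]$ (or $*$). Then $\mathrm{coal}^\flat(f):(\bar s_1,\dots,\bar s_{\bar m})\to(\bar t_1,\dots,\bar t_{\bar n})$ lies over $\bar\beta$. For a nested tuple morphism $f$: if $\bar m>1$, $\mathrm{coal}(f)=\mathrm{coal}^\flat(f^\flat)$; if $\bar m=1$, $\mathrm{coal}(f)$ is the morphism from the integer $\bar s_1$ to $(\bar t_1,\dots,\bar t_{\bar n})$ with the same underlying map; if $\bar m=0$, $\mathrm{coal}(f)$ is the morphism from the integer $1$ to $(\bar t_1,\dots,\bar t_{\bar n})$ sending its entry to $*$.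 *)

(* Defs.v *)
From mathcomp Require Import all_boot.
Set Implicit Arguments. Unset Strict Implicit. Unset Printing Implicit Defensive.

(* Nested tuples of positive integers: [nest nat] + positivity.        *)
(* A layout S:D with S, D congruent is encoded as a nested tuple of    *)
(* pairs (s_i, d_i) : nest (nat * nat) (congruence is then automatic). *)
Inductive nest (A : Type) : Type :=
  | NLeaf of A
  | NNode of seq (nest A).
Arguments NLeaf {A}.
Arguments NNode {A}.

Fixpoint flat (A : Type) (t : nest A) : seq A :=
  match t with
  | NLeaf a => [:: a]
  | NNode l => flatten (map (@flat A) l)
  end.

Definition layout := nest (nat * nat).

Fixpoint zipn (A B : Type) (b0 : B) (t : nest A) (ds : seq B)
  : nest (A * B) * seq B :=
  match t with
  | NLeaf a => (NLeaf (a, head b0 ds), behead ds)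
  | NNode l =>
      let fix go (l : seq (nest A)) (ds : seq B) : seq (nest (A * B)) * seq B :=
        match l with
        | [::] => ([::], ds)
        | x :: l' =>
            let (x', ds') := zipn b0 x ds in
            let (l'', ds'') := go l' ds' in (x' :: l'', ds'')
        end in
      let (l', ds') := go l ds in (NNode l', ds')
  end.

Definition squeezeL (l : seq (nat * nat)) : seq (nat * nat) :=
  filter (fun p => p.1 != 1) l.

(* Repeatedly merge adjacent modes (s,d),(s',d') with d' = s*d into (s*s',d).
   (The rewriting is confluent; this right fold computes its normal form.) *)
Fixpoint coal_merge (l : seq (nat * nat)) : seq (nat * nat) :=
  match l with
  | [::] => [::]
  | x :: l' =>
      match coal_merge l' with
      | [::] => [:: x]
      | y :: r => if y.2 == x.1 * x.2 then (x.1 * y.1, x.2) :: r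
                  else x :: y :: r
      end
  end.

Definition coal_flatL (l : seq (nat * nat)) : seq (nat * nat) :=
  coal_merge (squeezeL l).

Definition coalL (L : layout) : layout :=
  match coal_flatL (flat L) with
  | [::] => NLeaf (1, 0)
  | [:: p] => NLeaf p
  | c => NNode (map NLeaf c)
  end.

(* Tuple morphisms.  Indices are 0-based: domain index i < m, the      *)
(* pointed map alpha is the list [tm_map] of length m, with None = *   *)
(* and Some j meaning alpha(i) = j (j < n).                            *)
Record tmor := TMor { tm_dom : seq nat; tm_cod : seq nat;
                      tm_map : seq (option nat) }.

Definition is_tmor (f : tmor) : Prop :=
  [/\ all (fun s => 0 < s) (tm_dom f), all (fun t => 0 < t) (tm_cod f),
      size (tm_map f) = size (tm_dom f),
      (forall i j, nth None (tm_map f) i = Some j ->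
         j < size (tm_cod f) /\ nth 0 (tm_dom f) i = nth 0 (tm_cod f) j) &
      (forall i i' j, nth None (tm_map f) i = Some j ->
         nth None (tm_map f) i' = Some j -> i = i')].

Record ntmor := NTMor { ntm_dom : nest nat; ntm_cod : nest nat;
                        ntm_map : seq (option nat) }.

Definition flat_mor (f : ntmor) : tmor :=
  TMor (flat (ntm_dom f)) (flat (ntm_cod f)) (ntm_map f).

Definition is_ntmor (f : ntmor) : Prop := is_tmor (flat_mor f).

Definition enc_stride (t : seq nat) (o : option nat) : nat :=
  match o with
  | None => 0
  | Some j => foldr muln 1 (take j t)
  end.

Definition Lf (f : ntmor) : layout :=
  (zipn 0 (ntm_dom f) (map (enc_stride (flat (ntm_cod f))) (ntm_map f))).1.

Definition renumC (t : seq nat) (j : nat) : nat :=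
  count (fun k => nth 0 t k != 1) (iota 0 j).

Definition squeezeM (f : tmor) : tmor :=
  TMor (filter (fun s => s != 1) (tm_dom f))
       (filter (fun t => t != 1) (tm_cod f))
       [seq omap (renumC (tm_cod f)) p.2
          | p <- zip (tm_dom f) (tm_map f) & p.1 != 1].

Section CoalMor.
Variable g : tmor. (* assumed squeezed *)
Let s := tm_dom g.
Let t := tm_cod g.
Let b := tm_map g.
Let m := size s.
Let n := size t.

(* i ~ i' for i <= i' on the domain *)
Definition relD0 (i i' : nat) : bool :=
  let rng := iota i (i' - i).+1 in
  all (fun k => nth None b k == None) rng
  || ((nth None b i != None) &&
      all (fun k => nth None b k == omap (addn (k - i)) (nth None b i)) rng).

(* j ~ j' for j <= j' on the codomain *)
Definition relC0 (j j' : nat) : bool :=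
  has (fun i => all (fun u => nth None b (i + u) == Some (j + u))
                    (iota 0 (j' - j).+1)) (iota 0 m).

Definition leaderD (i : nat) : bool := all (fun k => ~~ relD0 k i) (iota 0 i).
Definition leaderC (j : nat) : bool := all (fun k => ~~ relC0 k j) (iota 0 j).

Definition clsD (i : nat) : nat := (count leaderD (iota 0 i.+1)).-1.
Definition clsC (j : nat) : nat := (count leaderC (iota 0 j.+1)).-1.
Definition mbar : nat := count leaderD (iota 0 m).
Definition nbar : nat := count leaderC (iota 0 n).

Definition sbar : seq nat :=
  [seq foldr muln 1 [seq nth 0 s i | i <- iota 0 m & clsD i == c] | c <- iota 0 mbar].
Definition tbar : seq nat :=
  [seq foldr muln 1 [seq nth 0 t j | j <- iota 0 n & clsC j == c] | c <- iota 0 nbar].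
(* bar beta([i]) = [beta(i)], computed at the least element of each class *)
Definition bbar : seq (option nat) :=
  [seq omap clsC (nth None b i) | i <- iota 0 m & leaderD i].

Definition coal_sq : tmor := TMor sbar tbar bbar.
End CoalMor.

Definition coal_flatM (f : tmor) : tmor := coal_sq (squeezeM f).

Definition coalM (f : ntmor) : ntmor :=
  let g := coal_flatM (flat_mor f) in
  let T := NNode (map NLeaf (tm_cod g)) in
  match tm_dom g with
  | [::] => NTMor (NLeaf 1) T [:: None]
  | [:: s1] => NTMor (NLeaf s1) T (tm_map g)
  | sb => NTMor (NNode (map NLeaf sb)) T (tm_map g)
  end.

(* Main.v *)
Require Import Defs.
From mathcomp Require Import all_boot.
From mathcomp Require Import zify.
Set Implicit Arguments. Unset Strict Implicit. Unset Printing Implicit Defensive.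

Definition clsF (ld : nat -> bool) (i : nat) : nat := (count ld (iota 0 i.+1)).-1.
Definition grpP (ld : nat -> bool) (w : nat -> nat) (m : nat) : seq nat :=
  [seq foldr muln 1 [seq w i | i <- iota 0 m & clsF ld i == c]
     | c <- iota 0 (count ld (iota 0 m))].

Lemma iota0S n : iota 0 n.+1 = 0 :: map S (iota 0 n).
Proof. by rewrite /= -[1]/(1+0) iotaDl; apply: congr1; apply: eq_map => x. Qed.

Lemma count_mono (p : nat -> bool) k k' : k <= k' ->
  count p (iota 0 k) <= count p (iota 0 k').
Proof.
move=> le; rewrite -(subnKC le) iotaD count_cat; exact: leq_addr.
Qed.

Lemma count_iotaS (p : nat -> bool) k :
  count p (iota 0 k.+1) = count p (iota 0 k) + p k.
Proof. by rewrite -addn1 iotaD count_cat /= addn0. Qed.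

Definition shiftld (ld : nat -> bool) := fun j => (j == 0) || ld j.+1.

Lemma cnt_shift (ld : nat -> bool) k : ld 0 ->
  count ld (iota 0 k.+2) = count (shiftld ld) (iota 0 k.+1) + ld 1.
Proof.
move=> h0; rewrite iota0S [iota 0 k.+1]iota0S /= h0 /shiftld /= !count_map.

have -> : count (preim succn (preim succn ld)) (iota 0 k) = count (preim succn (fun j => (j == 0) || ld j.+1)) (iota 0 k).
  by apply: eq_count => x.
case: (ld 1); lia.
Qed.

Lemma cls0 (ld : nat -> bool) : ld 0 -> clsF ld 0 = 0.
Proof. by rewrite /clsF /= => ->. Qed.

Lemma cnt_pos (ld : nat -> bool) k : ld 0 -> 0 < count ld (iota 0 k.+1).
Proof. by rewrite iota0S /= => ->. Qed.

Lemma cls_shift (ld : nat -> bool) k : ld 0 ->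
  clsF ld k.+1 = clsF (shiftld ld) k + ld 1.
Proof.
move=> h0; rewrite /clsF cnt_shift //.
Qed.

Lemma grp_cons (ld : nat -> bool) w n : ld 0 ->
  grpP ld w n.+2 = if ld 1 then (w 0 * 1) :: grpP (shiftld ld) (fun i => w i.+1) n.+1
    else match grpP (shiftld ld) (fun i => w i.+1) n.+1 with
         | [::] => [::] | g :: r => (w 0 * g) :: r end.
Proof.
move=> h0.
have Hf c : [seq w i | i <- iota 0 n.+2 & clsF ld i == c] =
   (if c == 0 then [:: w 0] else [::]) ++
   [seq w i.+1 | i <- iota 0 n.+1 & clsF (shiftld ld) i + ld 1 == c].
  rewrite [iota 0 n.+2]iota0S -cat1s filter_cat map_cat filter_map -map_comp.
  congr (_ ++ _); first by rewrite /= cls0 // eq_sym; case: (c == 0).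
  have -> : [seq x <- iota 0 n.+1 | preim succn (fun i => clsF ld i == c) x] =
            [seq i <- iota 0 n.+1 | clsF (shiftld ld) i + ld 1 == c].
    by apply: eq_filter => x /=; rewrite cls_shift.
  by [].
rewrite /grpP cnt_shift //.
have := @cnt_pos (shiftld ld) n erefl.
case: (count (shiftld ld) (iota 0 n.+1)) => [//|C] _.
have map1 : forall (T U : Type) (f : T -> U) x, map f [:: x] = [:: f x] by [].
have HfS c : [seq w i | i <- iota 0 n.+2 & clsF ld i == c.+1] =
   [seq w i.+1 | i <- iota 0 n.+1 & clsF (shiftld ld) i + ld 1 == c.+1].
  by rewrite Hf.
have Hf0 : [seq w i | i <- iota 0 n.+2 & clsF ld i == 0] =
   w 0 :: [seq w i.+1 | i <- iota 0 n.+1 & clsF (shiftld ld) i + ld 1 == 0].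
  by rewrite Hf.
case h1: (ld 1); rewrite h1 in HfS Hf0.
- have -> : C.+1 + true = C.+2 by rewrite addn1.
  rewrite [iota 0 C.+2]iota0S -cat1s map_cat -map_comp map1 Hf0 !cat1s.
  congr (_ :: _).
    have -> : [seq i <- iota 0 n.+1 | clsF (shiftld ld) i + true == 0] = [::].
      by rewrite (@eq_filter _ _ pred0) ?filter_pred0 // => x /=; rewrite addn1.
    by [].
  apply: eq_map => c /=.
  rewrite HfS; congr (foldr _ _ (map _ _)); apply: eq_filter => x.
  by rewrite addn1 eqSS.
- have -> : C.+1 + false = C.+1 by rewrite addn0.
  rewrite [iota 0 C.+1]iota0S -cat1s map_cat -map_comp map1 Hf0.
  rewrite -cat1s map_cat map1 -map_comp.
  rewrite (@eq_filter _ _ (fun i => clsF (shiftld ld) i == 0)); last first.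
    by move=> x; rewrite addn0.
  rewrite !cat1s.
  congr (_ :: _); apply: eq_map => c.
  change (foldr muln 1 [seq w i | i <- iota 0 n.+2 & clsF ld i == c.+1] = foldr muln 1 [seq w i.+1 | i <- iota 0 n.+1 & clsF (shiftld ld) i == c.+1]).
  rewrite HfS; congr (foldr _ _ (map _ _)); apply: eq_filter => x.
  by rewrite addn0.
Qed.

Lemma str_cons (ld : nat -> bool) (h : nat -> nat) n : ld 0 ->
  [seq h i | i <- iota 0 n.+2 & ld i] =
  h 0 :: (if ld 1 then id else @behead nat)
           [seq h i.+1 | i <- iota 0 n.+1 & shiftld ld i].
Proof.
move=> h0.
rewrite [iota 0 n.+2]iota0S -cat1s filter_cat filter_map /= h0 /=.
have E : [seq x <- iota 1 n | preim succn [eta ld] x] = [seq x <- iota 1 n | shiftld ld x].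
  apply: eq_in_filter => x; rewrite mem_iota => /andP[hx _].
  by rewrite /shiftld; case: x hx.
rewrite E; case: (ld 1) => /=; rewrite -?map_comp //.
Qed.

Lemma size_grpP ld w m : size (grpP ld w m) = count ld (iota 0 m).
Proof. by rewrite /grpP size_map size_iota. Qed.

Lemma coal_merge_cons x l : coal_merge (x :: l) =
  match coal_merge l with
  | [::] => [:: x]
  | y :: r => if y.2 == x.1 * x.2 then (x.1 * y.1, x.2) :: r else x :: y :: r
  end.
Proof. by []. Qed.

Lemma merge_char (l : seq (nat * nat)) (ld : nat -> bool) :
  ld 0 ->
  (forall k, 0 < k < size l -> ld k =
     ~~ ((nth (0,0) l k).2 == (nth (0,0) l k.-1).1 * (nth (0,0) l k.-1).2)) ->
  coal_merge l = zip (grpP ld (fun k => (nth (0,0) l k).1) (size l))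
                     [seq (nth (0,0) l i).2 | i <- iota 0 (size l) & ld i].
Proof.
elim: l ld => [|x l IH] ld h0 hR; first by [].
case: l IH hR => [|y l] IH hR.
  rewrite /grpP /clsF /= h0 /= muln1; by case: x hR.
have IH' := IH (shiftld ld) erefl.
rewrite coal_merge_cons IH'; last first.
  move=> [|k] //= hk.
  by rewrite /shiftld /= hR.
rewrite [size _]/= grp_cons // str_cons //.
have hne : 0 < size (grpP (shiftld ld) (fun k => (nth (0, 0) (y :: l) k).1) (size (y :: l))).
  by rewrite size_grpP; apply: cnt_pos.
case E: (grpP (shiftld ld) (fun k => (nth (0, 0) (y :: l) k).1) (size (y :: l))) hne => [//|g r] _.
rewrite [size (y :: l)]/= in E.
have Hs : [seq (nth (0,0) (y :: l) i).2 | i <- iota 0 (size l).+1 & shiftld ld i] =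
   y.2 :: [seq (nth (0,0) (y :: l) i.+1).2 | i <- iota 0 (size l) & shiftld ld i.+1].
  by rewrite iota0S /= filter_map -map_comp.
have h1 := hR 1 erefl.
rewrite /= in h1.
rewrite Hs /= h1.
case: (y.2 == x.1 * x.2) => /=; last by rewrite muln1; case: x {h1 hR}.
by [].
Qed.

Lemma cls_lt (ld : nat -> bool) i j : ld 0 -> ld j ->
  (clsF ld i < clsF ld j) = (i < j).
Proof.
move=> h0 hj; rewrite /clsF.
have pi := @cnt_pos ld i h0.
have ej : count ld (iota 0 j.+1) = count ld (iota 0 j) + 1 by rewrite count_iotaS hj.
case: (ltnP i j) => h.
  have := count_mono ld h; lia.
have := count_mono ld (h : j.+1 <= i.+1); lia.
Qed.

Lemma foldr_map_prod (F : nat -> nat) r : foldr muln 1 [seq F i | i <- r] = \prod_(i <- r) F i.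
Proof. by rewrite foldrE big_map. Qed.

Lemma foldr_filter_prod (F : nat -> nat) (P : pred nat) r :
  foldr muln 1 [seq F i | i <- r & P i] = \prod_(i <- r | P i) F i.
Proof. by rewrite foldr_map_prod big_filter. Qed.

Lemma filter_iota_lt j n : j <= n -> [seq i <- iota 0 n | i < j] = iota 0 j.
Proof.
move=> h; rewrite -(subnKC h) iotaD filter_cat.
rewrite (@eq_in_filter _ (fun i => i < j) predT); last by move=> x; rewrite mem_iota.
rewrite (@eq_in_filter _ (fun i => i < j) pred0); last first.
  by move=> x; rewrite mem_iota add0n => /andP[a _] /=; rewrite ltnNge a.
by rewrite filter_predT filter_pred0 cats0.
Qed.

Lemma grp_prefix (ld : nat -> bool) w j n : ld 0 -> ld j -> j < n ->
  foldr muln 1 (take (clsF ld j) (grpP ld w n)) = foldr muln 1 [seq w k | k <- iota 0 j].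
Proof.
move=> h0 hj hjn.
have cj : clsF ld j < count ld (iota 0 n).
  have := count_mono ld hjn; have := @cnt_pos ld j h0; rewrite /clsF; lia.
rewrite /grpP -map_take take_iota (minn_idPl (ltnW cj)).
have gen c : foldr muln 1 [seq foldr muln 1 [seq w i | i <- iota 0 n & clsF ld i == c'] | c' <- iota 0 c]
      = \prod_(i <- iota 0 n | clsF ld i < c) w i.
  elim: c => [|c IH].
    by rewrite /= big_pred0.
  rewrite foldr_map_prod -[c.+1]addn1 iotaD big_cat big_seq1 -foldr_map_prod IH.
  rewrite foldr_filter_prod [RHS](bigID (fun i => clsF ld i < c)) /=.
  congr (_ * _); apply: eq_bigl => i; rewrite addn1 ltnS.
    by case: ltngtP.
  by rewrite -leqNgt eqn_leq andbC.
rewrite gen (eq_bigl (fun i => i < j)); last by move=> i; rewrite cls_lt.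
by rewrite -big_filter filter_iota_lt ?(ltnW hjn) // foldr_map_prod.
Qed.

Definition nest_ind' (A : Type) (P : nest A -> Prop)
  (HL : forall a, P (NLeaf a))
  (HN : forall l, foldr (fun x acc => P x /\ acc) True l -> P (NNode l)) :
  forall t, P t :=
  fix F t := match t with
  | NLeaf a => HL a
  | NNode l => HN l ((fix G (l : seq (nest A)) : foldr (fun x acc => P x /\ acc) True l :=
                      match l with [::] => I | x :: l' => conj (F x) (G l') end) l)
  end.

Lemma zipn_cons (A B : Type) (b0 : B) (x : nest A) l ds :
  exists l'', (zipn b0 (NNode l) (zipn b0 x ds).2).1 = NNode l'' /\
    zipn b0 (NNode (x :: l)) ds =
      (NNode ((zipn b0 x ds).1 :: l''), (zipn b0 (NNode l) (zipn b0 x ds).2).2).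
Proof.
rewrite [zipn b0 (NNode (x :: l)) ds]/=.
case: (zipn b0 x ds) => x' d' /=.
match goal with |- context [ match ?e with pair _ _ => _ end ] => destruct e as [l0 d0] end.
by exists l0.
Qed.

Lemma zip_take_cat (S T : Type) (s1 s2 : seq S) (ds : seq T) :
  size s1 <= size ds ->
  zip (s1 ++ s2) ds = zip s1 ds ++ zip s2 (drop (size s1) ds).
Proof.
elim: s1 ds => [|x s1 IH] ds h; first by rewrite drop0; case: ds {h}.
by case: ds h => [|d ds] //= h; rewrite IH.
Qed.

Lemma flat_zipn (A B : Type) (b0 : B) (t : nest A) :
  forall ds, size (flat t) <= size ds ->
  flat (zipn b0 t ds).1 = zip (flat t) ds /\ (zipn b0 t ds).2 = drop (size (flat t)) ds.
Proof.
elim/nest_ind': t => [a|l].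
  case=> [|d ds] // _; split; [by case: ds | by rewrite /= drop0].
elim: l => [|x l IHl].
  by move=> _ ds _; rewrite drop0; case: ds.
move=> [Px Pl] ds hs.
have flat_cons : forall (C : Type) (a : nest C) (l : seq (nest C)), flat (NNode (a :: l)) = flat a ++ flat (NNode l) by [].
have [l'' [E1 E2]] := zipn_cons b0 x l ds.
have E2a : (zipn b0 (NNode (x :: l)) ds).1 = NNode ((zipn b0 x ds).1 :: l'') by rewrite E2.
have E2b : (zipn b0 (NNode (x :: l)) ds).2 = (zipn b0 (NNode l) (zipn b0 x ds).2).2 by rewrite E2.
rewrite E2a E2b (flat_cons _ (zipn b0 x ds).1 l'') !flat_cons -E1.
rewrite flat_cons size_cat in hs.
have hx : size (flat x) <= size ds by apply: leq_trans (leq_addr _ _) hs.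
have [F1 F2] := Px ds hx.
have hl : size (flat (NNode l)) <= size (zipn b0 x ds).2.
  by rewrite F2 size_drop; lia.
have [G1 G2] := IHl Pl _ hl.
rewrite F1 G1 G2 F2 drop_drop size_cat zip_take_cat //.
by rewrite addnC.
Qed.

Lemma flat_leaves (A : Type) (l : seq A) : flat (NNode (map NLeaf l)) = l.
Proof. by elim: l => //= a l IH; rewrite IH. Qed.

Lemma zipn_leaves (A B : Type) (b0 : B) (sb : seq A) :
  forall ds, size ds = size sb ->
  (zipn b0 (NNode (map NLeaf sb)) ds).1 = NNode (map NLeaf (zip sb ds)).
Proof.
elim: sb => [|a sb IH] [|d ds] // hs.
have hs' : size ds = size sb by case: hs.
have [l'' [E1 E2]] := zipn_cons b0 (NLeaf a) (map NLeaf sb) (d :: ds).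
have E2a : (zipn b0 (NNode (map NLeaf (a :: sb))) (d :: ds)).1 =
   NNode ((zipn b0 (NLeaf a) (d :: ds)).1 :: l'') by rewrite E2.
rewrite E2a.
have Z : zipn b0 (NLeaf a) (d :: ds) = (NLeaf (a, d), ds) by [].
rewrite Z in E1 *; rewrite IH // in E1.
by case: E1 => <-.
Qed.

Lemma foldr_mul_cat l1 l2 : foldr muln 1 (l1 ++ l2) = foldr muln 1 l1 * foldr muln 1 l2.
Proof. by elim: l1 => [|x l1 IH] /=; rewrite ?mul1n // IH mulnA. Qed.

Lemma foldr_mul_pos l : (forall x, x \in l -> 0 < x) -> 0 < foldr muln 1 l.
Proof.
elim: l => [|x l IH] //= h.
have hx : 0 < x by apply: h; rewrite mem_head.
rewrite muln_gt0 hx IH // => y hy; apply: h; by rewrite in_cons hy orbT.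
Qed.

Definition Pr (t : seq nat) k := foldr muln 1 (take k t).

Lemma Pr_pos t k : all (fun x => 0 < x) t -> 0 < Pr t k.
Proof.
move=> /allP h; apply: foldr_mul_pos => x hx; apply: h; exact: mem_take hx.
Qed.

Lemma renumC_take t k : k <= size t ->
  renumC t k = count (fun x => x != 1) (take k t).
Proof. by move=> hk; rewrite -(map_nth_iota0 0) // count_map. Qed.

Lemma foldr_eq1 R : (forall x, x \in R -> 0 < x) ->
  (foldr muln 1 R == 1) = (count (fun x => x != 1) R == 0).
Proof.
elim: R => [|x R IH] //= h.
rewrite muln_eq1 addn_eq0 eqb0 negbK IH // => y hy; apply: h; by rewrite in_cons hy orbT.
Qed.

Lemma Pr_eq t k k' : all (fun x => 0 < x) t -> k <= size t -> k' <= size t ->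
  (Pr t k == Pr t k') = (renumC t k == renumC t k').
Proof.
move=> hp.
wlog hkk : k k' / k <= k'.
  move=> W hk hk'; case: (leqP k k') => h; first exact: W.
  by rewrite eq_sym W ?(ltnW h) // eq_sym.
move=> hk hk'.
rewrite !renumC_take // /Pr.
rewrite -(cat_take_drop k (take k' t)) take_takel // foldr_mul_cat count_cat.
rewrite -{1}(muln1 (foldr muln 1 (take k t))) eqn_pmul2l; last first.
  by apply: foldr_mul_pos => x hx; move/allP: hp; apply; exact: mem_take hx.
rewrite -{1}(addn0 (count _ (take k t))) eqn_add2l eq_sym foldr_eq1 ?(eq_sym 0) //.
move=> x hx; move/allP: hp; apply.
by apply: mem_take (mem_drop hx).
Qed.

Lemma renumC_S t j : renumC t j.+1 = renumC t j + (nth 0 t j != 1).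
Proof. by rewrite /renumC count_iotaS. Qed.

Lemma Pr_S t j : j < size t -> Pr t j.+1 = nth 0 t j * Pr t j.
Proof. by move=> h; rewrite /Pr (take_nth 0 h) -cats1 foldr_mul_cat /= muln1 mulnC. Qed.

Lemma renumC_mono t j j' : j <= j' -> renumC t j <= renumC t j'.
Proof. exact: count_mono. Qed.

Lemma size_sq t : size [seq x <- t | x != 1] = renumC t (size t).
Proof. by rewrite size_filter renumC_take // take_size. Qed.

Lemma renumC_lt t j : j < size t -> nth 0 t j != 1 ->
  renumC t j < size [seq x <- t | x != 1].
Proof.
move=> hj h1; rewrite size_sq.
have := renumC_mono t hj; rewrite renumC_S h1 /=; lia.
Qed.

Lemma renumC_inj t j1 j2 : nth 0 t j1 != 1 -> nth 0 t j2 != 1 ->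
  renumC t j1 = renumC t j2 -> j1 = j2.
Proof.
move=> h1 h2 e.
case: (ltngtP j1 j2) => // h.
  by have := renumC_mono t h; rewrite renumC_S h1 e /=; lia.
by have := renumC_mono t h; rewrite renumC_S h2 e /=; lia.
Qed.

Lemma take_count_filter (T : Type) (p : pred T) s j :
  take (count p (take j s)) (filter p s) = filter p (take j s).
Proof.
elim: s j => [|x s IH] [|j] //=.
  by rewrite take0.
by case: (p x) => /=; rewrite IH.
Qed.

Lemma foldr_filter1 l : foldr muln 1 [seq x <- l | x != 1] = foldr muln 1 l.
Proof.
elim: l => [|x l IH] //=.
by case: eqP => [->|_] /=; rewrite IH ?mul1n.
Qed.

Lemma Pr_sq t j : j <= size t ->
  Pr t j = foldr muln 1 (take (renumC t j) [seq x <- t | x != 1]).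
Proof.
by move=> h; rewrite renumC_take // take_count_filter foldr_filter1.
Qed.

Definition adjb (o o' : option nat) : bool :=
  match o, o' with
  | None, None => true
  | Some x, Some y => y == x.+1
  | _, _ => false
  end.

Lemma L_rel (g : tmor) k :
  relD0 g k k.+1 = adjb (nth None (tm_map g) k) (nth None (tm_map g) k.+1).
Proof.
rewrite /relD0 subSnn /= subnn subSnn.
case: (nth None (tm_map g) k) => [x|]; case: (nth None (tm_map g) k.+1) => [y|] //=.
  by rewrite add0n eqxx add1n andbT /=; apply/eqP/eqP => [[]|->].
by rewrite andbF.
Qed.

Lemma L_lead (g : tmor) k : leaderD g k.+1 = ~~ relD0 g k k.+1.
Proof.
apply/idP/idP.
  by move/allP => h; apply: h; rewrite mem_iota /=.
move=> hn; apply/allP => j; rewrite mem_iota => /andP[_ hj]; rewrite add0n in hj.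
apply: contra hn => hr; rewrite L_rel.
have mk : k \in iota j (k.+1 - j).+1 by rewrite mem_iota; apply/andP; split; lia.
have mk1 : k.+1 \in iota j (k.+1 - j).+1 by rewrite mem_iota; apply/andP; split; lia.
case/orP: hr.
  move/allP => H.
  by rewrite (eqP (H _ mk)) (eqP (H _ mk1)).
case/andP => hne /allP H.
move: (H _ mk) (H _ mk1).
case: (nth None (tm_map g) j) hne => [x|] // _ /eqP -> /eqP -> /=.
apply/eqP; lia.
Qed.

Lemma leaderC_of (g : tmor) i j :
  (forall i i' x, nth None (tm_map g) i = Some x -> nth None (tm_map g) i' = Some x -> i = i') ->
  leaderD g i -> nth None (tm_map g) i = Some j -> leaderC g j.
Proof.
move=> inj hl hb.
apply/allP => k; rewrite mem_iota => /andP[_ hk]; rewrite add0n in hk.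
apply/negP => /hasP [i' _ /allP H].
have H1 := H (j - k).
rewrite mem_iota add0n ltnSn andbT /= in H1.
have H1' := eqP (H1 erefl).
rewrite subnKC ?(ltnW hk) // in H1'.
have ei := inj _ _ _ H1' hb.
have H2 := H (j - k).-1.
rewrite mem_iota add0n /= in H2.
have H2' : nth None (tm_map g) (i' + (j - k).-1) = Some (k + (j - k).-1).
  by apply/eqP; apply: H2; lia.
have ei' : i = (i' + (j - k).-1).+1 by lia.
rewrite ei' L_lead L_rel H2' -ei' hb /= in hl.
by move/negP: hl; apply; apply/eqP; lia.
Qed.

Lemma grpP_eq (ld : nat -> bool) w w' m : (forall k, k < m -> w k = w' k) ->
  grpP ld w m = grpP ld w' m.
Proof.
move=> h; apply: eq_map => c; congr (foldr _ _ _); apply/eq_in_map => i.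
by rewrite mem_filter mem_iota => /andP[_ /andP[_ hi]]; apply: h.
Qed.

Lemma L_key (t : seq nat) (o o' : option nat) sp :
  all (fun x => 0 < x) t -> sp != 1 ->
  (forall j, o = Some j -> j < size t /\ sp = nth 0 t j) ->
  (forall j', o' = Some j' -> j' < size t) ->
  adjb (omap (renumC t) o) (omap (renumC t) o') = (enc_stride t o' == sp * enc_stride t o).
Proof.
move=> hp hs1 ho ho'.
case: o ho => [j|] ho; case: o' ho' => [j'|] ho' /=.
- have [hj esp] := ho j erefl; have hj' := ho' j' erefl.
  rewrite -[foldr muln 1 (take j t)]/(Pr t j) -[foldr muln 1 (take j' t)]/(Pr t j').
  by rewrite esp -Pr_S // Pr_eq ?(ltnW hj') // renumC_S -esp hs1 addn1.
- have [hj esp] := ho j erefl.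
  rewrite eq_sym muln_eq0 -[foldr muln 1 (take j t)]/(Pr t j) (eqn0Ngt (Pr t j)) Pr_pos //.
  have : 0 < sp by rewrite esp; move/allP: hp; apply; exact: mem_nth.
  by rewrite orbF; case: sp {ho hs1 esp}.
- have hj' := ho' j' erefl.
  by rewrite muln0 -[foldr muln 1 (take j' t)]/(Pr t j') eqn0Ngt Pr_pos.
- by rewrite muln0.
Qed.

Theorem mainTheorem3 (f : ntmor) : is_ntmor f -> coalL (Lf f) = Lf (coalM f).
Proof.
case: f => D T a.
rewrite /is_ntmor /is_tmor /flat_mor /=.
move=> [Hs Ht Hsz Hmap Hinj].
pose s := flat D; pose t := flat T.
pose idx := [seq k <- iota 0 (size s) | nth 0 s k != 1].
have s_eq : s = [seq nth 0 s k | k <- iota 0 (size s)] by rewrite map_nth_iota0 // take_size.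
have a_eq : a = [seq nth None a k | k <- iota 0 (size s)] by rewrite -Hsz map_nth_iota0 // take_size.
pose P := [seq (nth 0 s k, enc_stride t (nth None a k)) | k <- idx].
have R1 : flat (Lf (NTMor D T a)) = zip s (map (enc_stride t) a).
  rewrite /Lf /=.
  have hsz : size (flat D) <= size (map (enc_stride t) a) by rewrite size_map Hsz.
  by have [-> _] := @flat_zipn _ _ 0 D (map (enc_stride t) a) hsz.
have R2 : squeezeL (zip s (map (enc_stride t) a)) = P.
  rewrite /squeezeL {1}s_eq {1}a_eq -map_comp zip_map filter_map.
  by rewrite /P /idx; congr (map _ _); apply: eq_filter.
pose g := squeezeM (TMor s t a).
have Gd : tm_dom g = [seq nth 0 s k | k <- idx].
  by rewrite /g /squeezeM /= {1}s_eq filter_map.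
have Gc : tm_cod g = [seq x <- t | x != 1] by [].
have Gm : tm_map g = [seq omap (renumC t) (nth None a k) | k <- idx].
  rewrite /g /squeezeM /= {1}s_eq {1}a_eq zip_map filter_map -map_comp.
  by congr (map _ _); apply: eq_filter.
have idx_uniq : uniq idx by apply: filter_uniq; apply: iota_uniq.
have idx_mem : forall i, i < size idx -> nth 0 idx i < size s /\ nth 0 s (nth 0 idx i) != 1.
  move=> i hi; have := mem_nth 0 hi; rewrite mem_filter mem_iota => /andP[-> /andP[_ h]].
  by split.
have szP : size P = size idx by rewrite size_map.
have szG : size (tm_dom g) = size idx by rewrite Gd size_map.
have bnth : forall i, i < size idx -> nth None (tm_map g) i = omap (renumC t) (nth None a (nth 0 idx i)).
  by move=> i hi; rewrite Gm (nth_map 0).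
have bdef : forall i x, nth None (tm_map g) i = Some x -> i < size idx.
  move=> i x; case: (ltnP i (size idx)) => // hi.
  by rewrite nth_default // Gm size_map.
have Pnth : forall i, i < size idx -> nth (0,0) P i = (nth 0 s (nth 0 idx i), enc_stride t (nth None a (nth 0 idx i))).
  by move=> i hi; rewrite (nth_map 0).
have inj : forall i i' x, nth None (tm_map g) i = Some x -> nth None (tm_map g) i' = Some x -> i = i'.
  move=> i i' x e1 e2.
  have hi := bdef _ _ e1; have hi' := bdef _ _ e2.
  rewrite bnth // in e1; rewrite bnth // in e2.
  have [_ h1] := idx_mem _ hi; have [_ h1'] := idx_mem _ hi'.
  case E1: (nth None a (nth 0 idx i)) e1 => [j1|] // [e1].
  case E2: (nth None a (nth 0 idx i')) e2 => [j2|] // [e2].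
  have [hj1 q1] := Hmap _ _ E1; have [hj2 q2] := Hmap _ _ E2.
  have ej : j1 = j2.
    by apply: (@renumC_inj t); rewrite -?q1 -?q2 // e1 e2.
  subst j2.
  have := Hinj _ _ _ E1 E2 => /eqP; rewrite nth_uniq // => /eqP.
  done.
have HZ : coal_merge P = zip (sbar g) (map (enc_stride (tbar g)) (bbar g)).
  rewrite (@merge_char P (leaderD g)) //; last first.
    move=> [|i] // /andP[_ hi]; rewrite szP in hi.
    have hi0 : i < size idx by apply: ltnW.
    rewrite L_lead L_rel bnth // bnth // Pnth // Pnth //= .
    have [hp1 hs1] := idx_mem _ hi0.
    congr negb; apply: L_key => //.
      by move=> j E; have [? ?] := Hmap _ _ E.
    by move=> j E; have [? ?] := Hmap _ _ E.
  congr zip.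
    rewrite /sbar -/(grpP (leaderD g) (nth 0 (tm_dom g)) (size (tm_dom g))) szG szP.
    apply: grpP_eq => k hk; rewrite Pnth // Gd (nth_map 0) //.
  rewrite /bbar -map_comp szP szG; apply/eq_in_map => i.
  rewrite mem_filter mem_iota => /andP[hl /andP[_ hi]].
  rewrite Pnth //= bnth //.
  have [hp1 hs1] := idx_mem _ hi.
  case E: (nth None a (nth 0 idx i)) => [j|] //=.
  have [hj q] := Hmap _ _ E.
  have hj1 : nth 0 t j != 1 by rewrite -q.
  have hL : leaderC g (renumC t j).
    apply: (@leaderC_of g i) => //; by rewrite bnth // E.
  rewrite -/(grpP (leaderC g) (nth 0 (tm_cod g)) (size (tm_cod g))).
  rewrite -/(clsF (leaderC g) (renumC t j)).
  rewrite grp_prefix //; last by rewrite Gc; apply: renumC_lt.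
  rewrite map_nth_iota0; last by rewrite Gc size_sq renumC_mono // ltnW.
  by rewrite Gc -Pr_sq // ltnW.
have -> : coalL (Lf (NTMor D T a)) =
   match coal_merge P with
   | [::] => NLeaf (1, 0) | [:: p] => NLeaf p | c => NNode (map NLeaf c) end.
  by rewrite /coalL /coal_flatL R1 R2.
have -> : coalM (NTMor D T a) = match sbar g with
   | [::] => NTMor (NLeaf 1) (NNode (map NLeaf (tbar g))) [:: None]
   | [:: s1] => NTMor (NLeaf s1) (NNode (map NLeaf (tbar g))) (bbar g)
   | sb => NTMor (NNode (map NLeaf sb)) (NNode (map NLeaf (tbar g))) (bbar g) end.
  by [].
have hsz : size (bbar g) = size (sbar g) by rewrite /bbar /sbar !size_map size_filter size_iota.
rewrite HZ.
case: (sbar g) (bbar g) hsz => [|s1 [|s2 r]] [|b1 [|b2 r']] // hsz.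
  by rewrite /Lf [ntm_cod _]/= flat_leaves.
rewrite /Lf [ntm_cod _]/= flat_leaves (@zipn_leaves _ _ 0 [:: s1, s2 & r] (map (enc_stride (tbar g)) [:: b1, b2 & r'])) //.
by rewrite size_map.
Qed.
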